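(* Let $n\ge 2$ be even. Consider the generalized $n$-gene repressilator system $$\dot r_i = a_i(p_{i-1}) - d_{r_i}(r_i),\qquad \dot p_i = k_i(r_i) - d_{p_i}(p_i),\qquad i=1,\dots,n,$$ (indices mod $n$), with functions satisfying the standing assumptions in the context. Assume: (i) $\lim_{x\to\infty} a_i(x)=0$ for all $i$; (ii) for all $i$, $\delta_i^R > a_i(0)$ and $\delta_i^P > k_i(d_{r_i}^{-1}(a_i(0)))$, where $\delta_i^R:=\lim_{x\to\infty} d_{r_i}(x)$ and $\delta_i^P:=\lim_{x\to\infty} d_{p_i}(x)$ (possibly $+\infty$); (iii) $d_{p_i}'(0)\neq 0$ and $d_{r_i}'(0)\neq 0$ for all $i$. Then the central steady state $E_C$ exists and is a steady state of the system: that is, for each $i$ the fixed-point equation $p_i = f_i\circ f_{i-1}\circ\cdots\circ f_1\circ f_n\circ\cdots\circ f_{i+1}(p_i)$ has a positive solution, and there are such solutions $p_1^*,\dots,p_n^*>0$ for which $$E_C=\big(d_{r_1}^{-1}(a_1(p_n^* )),\,d_{r_2}^{-1}(a_2(p_1^* )),\dots,d_{r_n}^{-1}(a_n(p_{n-1}^* )),\,p_1^*,\dots,p_n^*\big)$$ is a steady state.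
   Context: Standing assumptions: each $a_i:[0,\infty)\to\mathbb{R}$ is $C^1$, nonnegative, strictly decreasing, with $a_i(0)>0$. Each $d_{r_i}, d_{p_i}, k_i:[0,\infty)\to\mathbb{R}$ is $C^1$, vanishes at $0$, and is strictly increasing on $(0,\infty)$. Define $f_i := d_{p_i}^{-1}\circ k_i\circ d_{r_i}^{-1}\circ a_i$ (well defined under assumption (ii)). *)

(* Defs.v *)
From HB Require Import structures.
From mathcomp Require Import all_boot all_order all_algebra.
From mathcomp Require Import all_classical all_reals all_analysis.
Set Implicit Arguments. Unset Strict Implicit. Unset Printing Implicit Defensive.
Import Order.TTheory GRing.Theory Num.Theory.
Import numFieldNormedType.Exports.
Local Open Scope classical_set_scope.
Local Open Scope ring_scope.

Section Defs.
Variable R : realType.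

Definition C1_on_nonneg (f df : R -> R) : Prop :=
  {within `[0, +oo[, continuous df} /\
  (forall x : R, 0 < x -> is_derive x 1 f (df x)) /\
  ((fun h : R => h^-1 * (f h - f 0)) @ 0^'+ --> df 0).

(* inverse of f restricted to [0,oo): some x >= 0 with f x = y
   (unique when f is injective on [0,oo)); 0 if no such x exists. *)
Definition pos_inv (f : R -> R) (y : R) : R :=
  xget 0 [set x | 0 <= x /\ f x = y].

(* index i-1 modulo n, for indices 0 .. n-1 *)
Definition prev_idx (n i : nat) : nat := ((i + n.-1) %% n)%N.

Definition rep_f (a dr k dp : nat -> R -> R) (i : nat) : R -> R :=
  fun x => pos_inv (dp i) (k i (pos_inv (dr i) (a i x))).

(* f_i o f_{i-1} o ... o f_1 o f_n o ... o f_{i+1}  (indices mod n):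
   first apply f_{i+1}, then f_{i+2}, ..., last f_i. *)
Definition cyc_comp (f : nat -> R -> R) (n i : nat) (x : R) : R :=
  foldl (fun y k => f ((i + 1 + k) %% n)%N y) x (iota 0 n).

Definition repr_steady_state (n : nat) (a dr k dp : nat -> R -> R)
  (r p : nat -> R) : Prop :=
  forall i, (i < n)%N ->
    a i (p (prev_idx n i)) - dr i (r i) = 0 /\ k i (r i) - dp i (p i) = 0.

End Defs.

(* Main.v *)
Require Import Defs.
From HB Require Import structures.
From mathcomp Require Import all_boot all_order all_algebra.
From mathcomp Require Import all_classical all_reals all_analysis.
Import Order.TTheory GRing.Theory Num.Theory.
Import numFieldNormedType.Exports.
Local Open Scope classical_set_scope.
Local Open Scope ring_scope.

Section H.
Variable R : realType.
Implicit Types (f df : R -> R).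

Lemma rc0 {f df} : C1_on_nonneg f df -> f x @[x --> 0^'+] --> f 0.
Proof.
case=> _ [_ Hd].
have Hid : (fun h : R => h) @ 0^'+ --> (0:R).
  by apply: cvg_at_right_filter; exact: cvg_id.
have := cvgM Hid Hd; rewrite mul0r => /(_ _) H.
apply/subr_cvg0; apply: cvg_trans H; apply: near_eq_cvg.
near=> h; rewrite /= mulrA mulfV ?mul1r //.
Unshelve. all: by end_near. Qed.

Lemma contp {f df} : C1_on_nonneg f df -> forall x, 0 < x -> {for x, continuous f}.
Proof.
case=> _ [Hd _] x hx.
have : derivable f x 1 by case: (Hd x hx).
by move/derivable1_diffP; exact: differentiable_continuous.
Qed.

Lemma strict0 {f df} : C1_on_nonneg f df -> f 0 = 0 ->
  (forall x y, 0 < x -> x < y -> f x < f y) -> forall y, 0 < y -> 0 < f y.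
Proof.
move=> C f0 inc y hy; rewrite ltNge; apply/negP => fy.
have hy2 : 0 < y / 2 by rewrite divr_gt0.
have hy2y : y / 2 < y by rewrite ltr_pdivrMr // ltr_pMr // ltr1n.
have fy2 : f (y/2) < 0 by apply: lt_le_trans (inc _ _ hy2 hy2y) fy.
have := rc0 C; move/cvgrPdist_lt => /(_ (- f (y/2))).
rewrite oppr_gt0 => /(_ fy2) H.
have [h [h0 [hy' hd]]] : exists h, 0 < h /\ h < y/2 /\ `|f 0 - f h| < - f (y/2).
  apply: (@filter_ex _ (0:R)^'+); near=> h; split; first by near: h; exact: nbhs_right_gt.
  split; first by near: h; exact: nbhs_right_lt.
  by near: h; exact: H.
move: hd; rewrite f0 sub0r normrN => hd.
have fh := inc _ _ h0 hy'.
have : - f h < - f (y/2) by apply: le_lt_trans hd; rewrite -normrN ler_norm.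
rewrite ltrN2 => /lt_trans /(_ fh); rewrite ltxx //.
Unshelve. all: by end_near. Qed.


Lemma inc0 {f df} : C1_on_nonneg f df -> f 0 = 0 ->
  (forall x y, 0 < x -> x < y -> f x < f y) ->
  forall x y, 0 <= x -> x < y -> f x < f y.
Proof.
move=> C f0 inc x y; rewrite le_eqVlt => /orP[/eqP <-|]; last exact: inc.
by move=> hy; rewrite f0; exact: (strict0 C).
Qed.

Lemma ivt0 {f df} : C1_on_nonneg f df -> f 0 = 0 ->
  (forall x y, 0 < x -> x < y -> f x < f y) ->
  forall v b, 0 <= v -> 0 <= b -> v <= f b -> exists c, 0 <= c /\ f c = v.
Proof.
move=> C f0 inc v b v0; rewrite le_eqVlt => /orP[/eqP <-|b0] vb.
  by exists 0; split => //; apply/eqP; rewrite f0 eq_le v0 -f0 vb.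
have fb0 : 0 < f b by exact: (strict0 C).
have ct : {within `[0, b], continuous f}.
  apply/continuous_within_itvP => //; split.
  - move=> x; rewrite in_itv /= => /andP[x0 _]; exact: (contp C).
  - exact: (rc0 C).
  - by apply: cvg_at_left_filter; exact: (contp C).
have hv : Num.min (f 0) (f b) <= v <= Num.max (f 0) (f b).
  by rewrite f0 min_l ?max_r ?v0 ?vb // ltW.
have [c] := IVT (ltW b0) ct hv.
by rewrite in_itv /= => /andP[c0 _] fc; exists c.
Qed.

Lemma pos_inv_ge0 f y : 0 <= pos_inv f y.
Proof. by rewrite /pos_inv; case: xgetP => // x _ []. Qed.

Lemma pos_invP f y : (exists x, 0 <= x /\ f x = y) -> f (pos_inv f y) = y.
Proof. by move=> /(xgetPex 0) []. Qed.

Lemma pos_inv_mono f y1 y2 :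
  (forall x y, 0 <= x -> x < y -> f x < f y) ->
  f (pos_inv f y1) = y1 -> f (pos_inv f y2) = y2 -> y1 <= y2 ->
  pos_inv f y1 <= pos_inv f y2.
Proof.
move=> inc e1 e2 y12; rewrite leNgt; apply/negP => /(inc _ _ (pos_inv_ge0 _ _)).
by rewrite e1 e2 => /(le_lt_trans y12); rewrite ltxx.
Qed.

Lemma big_val f (A : R) : (forall x y, 0 <= x -> x < y -> f x < f y) ->
  (A%:E < lim ((f x)%:E @[x --> +oo%R]))%E -> exists b, 0 <= b /\ A < f b.
Proof.
move=> inc hA.
pose g x := (f (Num.max x 0))%:E.
have ndg : nondecreasing_fun g.
  move=> x y xy; rewrite /g lee_fin.
  have m0 : 0 <= Num.max x 0 by rewrite le_max lexx orbT.
  have mxy : Num.max x 0 <= Num.max y 0.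
    rewrite ge_max !le_max xy lexx /= orbT //.
  move: mxy; rewrite le_eqVlt => /orP[/eqP ->//|/(inc _ _ m0)/ltW //].
have cg := nondecreasing_cvge ndg.
have cf : (f x)%:E @[x --> +oo%R] --> ereal_sup (range g).
  apply: cvg_trans cg; apply: near_eq_cvg; near=> x.
  rewrite /g max_l //; apply: ltW; near: x; exact: nbhs_pinfty_gt.
move: hA; rewrite (cvg_lim _ cf) // => /ereal_sup_gt [_ [x _ <-]].
rewrite /g lte_fin => h; exists (Num.max x 0); split => //.
by rewrite le_max lexx orbT.
Unshelve. all: by end_near. Qed.


Lemma one_props (a dr k dp a' dr' k' dp' : R -> R) :
  [/\ C1_on_nonneg a a', (forall x, 0 <= x -> 0 <= a x),
      (forall x y, 0 <= x -> x < y -> a y < a x) & 0 < a 0] ->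
  [/\ C1_on_nonneg dr dr', dr 0 = 0 & forall x y, 0 < x -> x < y -> dr x < dr y] ->
  [/\ C1_on_nonneg dp dp', dp 0 = 0 & forall x y, 0 < x -> x < y -> dp x < dp y] ->
  [/\ C1_on_nonneg k k', k 0 = 0 & forall x y, 0 < x -> x < y -> k x < k y] ->
  ((a 0)%:E < lim ((dr x)%:E @[x --> +oo%R]))%E /\
  ((k (pos_inv dr (a 0)))%:E < lim ((dp x)%:E @[x --> +oo%R]))%E ->
  (forall x, 0 <= x ->
    [/\ 0 < pos_inv dr (a x), dr (pos_inv dr (a x)) = a x,
        0 < pos_inv dp (k (pos_inv dr (a x))) &
        dp (pos_inv dp (k (pos_inv dr (a x)))) = k (pos_inv dr (a x))]) /\
  (forall x y, 0 <= x -> x <= y ->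
     pos_inv dp (k (pos_inv dr (a y))) <= pos_inv dp (k (pos_inv dr (a x)))).
Proof.
move=> [Ca a0 adec apos] [Cr r0 rinc] [Cp p0 pinc] [Ck k0 kinc] [l1 l2].
have rinc0 := inc0 Cr r0 rinc.
have pinc0 := inc0 Cp p0 pinc.
have kinc0 := inc0 Ck k0 kinc.
have apos' : forall x, 0 <= x -> 0 < a x.
  move=> x x0; apply: le_lt_trans (a0 (x + 1) _) (adec _ _ x0 _).
    by rewrite addr_ge0.
  by rewrite ltrDl.
have ale : forall x y, 0 <= x -> x <= y -> a y <= a x.
  move=> x y x0; rewrite le_eqVlt => /orP[/eqP ->//|/(adec _ _ x0)/ltW //].
have [br [br0 hbr]] := @big_val dr (a 0) rinc0 l1.
have rex : forall x, 0 <= x -> exists c, 0 <= c /\ dr c = a x.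
  move=> x x0; apply: (ivt0 Cr r0 rinc _ _ _ br0).
    exact: ltW (apos' _ x0).
  exact: le_trans (ale _ _ (lexx 0) x0) (ltW hbr).
have rP : forall x, 0 <= x -> dr (pos_inv dr (a x)) = a x.
  by move=> x x0; apply: pos_invP; exact: rex.
have rpos : forall x, 0 <= x -> 0 < pos_inv dr (a x).
  move=> x x0; rewrite lt_neqAle pos_inv_ge0 andbT; apply/eqP => e.
  by have := rP x x0; rewrite -e r0 => h; move: (apos' x x0); rewrite -h ltxx.
have rle : forall x y, 0 <= x -> x <= y -> pos_inv dr (a y) <= pos_inv dr (a x).
  move=> x y x0 xy; apply: pos_inv_mono => //; [exact: rP (le_trans x0 xy)|exact: rP|].
  exact: ale.
have kle : forall u v, 0 <= u -> u <= v -> k u <= k v.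
  move=> u v u0; rewrite le_eqVlt => /orP[/eqP ->//|/(kinc0 _ _ u0)/ltW //].
have [bp [bp0 hbp]] := @big_val dp _ pinc0 l2.
have pex : forall x, 0 <= x -> exists c, 0 <= c /\ dp c = k (pos_inv dr (a x)).
  move=> x x0; apply: (ivt0 Cp p0 pinc _ _ _ bp0).
    exact: ltW (strict0 Ck k0 kinc _ (rpos x x0)).
  apply: le_trans (ltW hbp); apply: kle; first exact: pos_inv_ge0.
  exact: rle.
have pP : forall x, 0 <= x ->
    dp (pos_inv dp (k (pos_inv dr (a x)))) = k (pos_inv dr (a x)).
  by move=> x x0; apply: pos_invP; exact: pex.
split.
  move=> x x0; split; [exact: rpos|exact: rP| |exact: pP].
  rewrite lt_neqAle pos_inv_ge0 andbT; apply/eqP => e.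
  have := pP x x0; rewrite -e p0 => h.
  by move: (strict0 Ck k0 kinc _ (rpos x x0)); rewrite -h ltxx.
move=> x y x0 xy; apply: pos_inv_mono => //; [exact: pP (le_trans x0 xy)|exact: pP|].
by apply: kle; [exact: pos_inv_ge0|exact: rle].
Qed.


Fixpoint chain (F : nat -> R -> R) (n : nat) (x : R) (m : nat) : R :=
  if m is m'.+1 then F (m' %% n)%N (chain F n x m') else x.

End H.
Arguments chain {R}.

Theorem proposition2 (R : realType) (n : nat)
  (a dr k dp : nat -> R -> R) (a' dr' k' dp' : nat -> R -> R) :
  (2 <= n)%N -> ~~ odd n ->
  (* standing assumptions *)
  (forall i, (i < n)%N ->
     [/\ C1_on_nonneg (a i) (a' i),
         (forall x, 0 <= x -> 0 <= a i x),
         (forall x y, 0 <= x -> x < y -> a i y < a i x) &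
         0 < a i 0]) ->
  (forall i, (i < n)%N ->
     [/\ C1_on_nonneg (dr i) (dr' i), dr i 0 = 0 &
         forall x y, 0 < x -> x < y -> dr i x < dr i y]) ->
  (forall i, (i < n)%N ->
     [/\ C1_on_nonneg (dp i) (dp' i), dp i 0 = 0 &
         forall x y, 0 < x -> x < y -> dp i x < dp i y]) ->
  (forall i, (i < n)%N ->
     [/\ C1_on_nonneg (k i) (k' i), k i 0 = 0 &
         forall x y, 0 < x -> x < y -> k i x < k i y]) ->
  (* (i) *)
  (forall i, (i < n)%N -> a i x @[x --> +oo] --> 0) ->
  (* (ii) *)
  (forall i, (i < n)%N ->
     ((a i 0)%:E < lim ((dr i x)%:E @[x --> +oo%R]))%E /\
     ((k i (pos_inv (dr i) (a i 0)))%:E < lim ((dp i x)%:E @[x --> +oo%R]))%E) ->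
  (* (iii) *)
  (forall i, (i < n)%N -> dp' i 0 != 0 /\ dr' i 0 != 0) ->
  exists ps : nat -> R,
    (forall i, (i < n)%N ->
       0 < ps i /\ ps i = cyc_comp (rep_f a dr k dp) n i (ps i)) /\
    repr_steady_state n a dr k dp
      (fun i => pos_inv (dr i) (a i (ps (prev_idx n i)))) ps.
Proof.
move=> n2 ev Ha Hr Hp Hk _ Hii _.
set F := rep_f a dr k dp.
have n0 : (0 < n)%N by apply: leq_trans n2.
have P : forall i, (i < n)%N -> _ :=
  fun i hi => @one_props R _ _ _ _ _ _ _ _ (Ha i hi) (Hr i hi) (Hp i hi) (Hk i hi) (Hii i hi).
have Fge0 : forall i x, 0 <= F i x by move=> i x; exact: pos_inv_ge0.
have Fmono : forall i x y, (i < n)%N -> 0 <= x -> x <= y -> F i y <= F i x.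
  by move=> i x y hi x0 xy; have [_ H] := P i hi; exact: H.
have Fpos : forall i x, (i < n)%N -> 0 <= x -> 0 < F i x.
  by move=> i x hi x0; have [H _] := P i hi; have [] := H x x0.
have chain_mono : forall m x y, 0 <= x -> x <= y ->
    [/\ 0 <= chain F n x m, 0 <= chain F n y m &
      (if odd m then chain F n y m <= chain F n x m
       else chain F n x m <= chain F n y m)].
  elim => [|m IH] x y x0 xy /=; first by split => //; exact: le_trans xy.
  have [h1 h2 h3] := IH x y x0 xy.
  split; [exact: Fge0|exact: Fge0|].
  by case: (odd m) h3 => /= h3; apply: Fmono => //; exact: ltn_pmod.
pose g x := chain F n x n.
have gmono : forall x y, 0 <= x -> x <= y -> g x <= g y.
  by move=> x y x0 xy; have [_ _] := chain_mono n x y x0 xy; rewrite (negbTE ev).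
have gge0 : forall x, 0 <= x -> 0 <= g x.
  by move=> x x0; have [] := chain_mono n x x x0 (lexx x).
have gub : forall x, 0 <= x -> g x <= F (n.-1 %% n)%N 0.
  move=> x x0; rewrite /g [X in chain _ _ _ X](esym (prednK n0)) /=.
  apply: Fmono => //; first exact: ltn_pmod.
  by have [] := chain_mono n.-1 x x x0 (lexx x).
pose S := [set x | 0 <= x /\ x <= g x].
have S0 : S 0 by split => //; exact: gge0.
have hsup : has_sup S.
  split; first by exists 0.
  exists (F (n.-1 %% n)%N 0) => x [x0 xg]; exact: le_trans xg (gub x x0).
pose p := sup S.
have p0 : 0 <= p := sup_upper_bound hsup S0.
have pg : p <= g p.
  apply: ge_sup; first by exists 0.
  move=> x [x0 xg].
  exact: (le_trans xg (gmono _ _ x0 (sup_upper_bound hsup (conj x0 xg)))).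
have gp : g p <= p.
  have Sg : S (g p) by split; [exact: gge0|exact: gmono].
  exact: (sup_upper_bound hsup Sg).
have gfix : g p = p by apply/eqP; rewrite eq_le gp pg.
pose ps i := chain F n p (i %% n).+1.
have ps_mod : forall i, ps (i %% n)%N = ps i by move=> i; rewrite /ps modn_mod.
have step : forall m, chain F n p m.+1 = F (m %% n)%N (chain F n p m) by [].
have key : forall j, ps ((j + 1) %% n)%N = F ((j + 1) %% n)%N (ps (j %% n)%N).
  move=> j; rewrite ps_mod /ps.
  have := ltn_pmod j n0; move: (j %% n)%N (modnDml j 1 n) => t <- ht.
  case: (ltnP t.+1 n) => ht'.
    by rewrite addn1 (modn_small ht') (modn_small ht) step (modn_small ht').
  have etn : t.+1 = n by apply/eqP; rewrite eqn_leq ht ht'.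
  rewrite addn1 etn modnn step mod0n (modn_small ht) etn.
  by move: gfix; rewrite /g => ->.
have ps_pos : forall i, 0 < ps i.
  move=> i; rewrite /ps /=; apply: Fpos; first exact: ltn_pmod.
  by have [] := chain_mono (i %% n)%N p p p0 (lexx p).
have cyc : forall i m, foldl (fun y k => F ((i + 1 + k) %% n)%N y) (ps i) (iota 0 m)
    = ps ((i + m) %% n)%N.
  move=> i; elim => [|m IH]; first by rewrite addn0 ps_mod.
  rewrite -[m.+1]addn1 iotaD foldl_cat IH /= add0n addnA addnAC.
  by rewrite -key.
exists ps; split.
  move=> i hi; split => //.
  by rewrite /cyc_comp cyc modnDr ps_mod.
move=> i hi; rewrite /prev_idx.
set j := ((i + n.-1) %% n)%N.
have ej : ((j + 1) %% n)%N = i.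
  by rewrite /j modnDml -addnA addn1 prednK // modnDr modn_small.
have psi : ps i = F i (ps j) by rewrite -{1}ej key ej /j modn_mod.
have [H _] := P i hi.
have [_ rP _ pP] := H (ps j) (ltW (ps_pos j)).
split; first by rewrite rP subrr.
by rewrite psi /F /rep_f pP subrr.
Qed.
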